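(* Let $V$ be a nonempty set, $T:V\to V$, and let $l\ge0$ be an integer with $|T^l(V)|=|T^{l+1}(V)|=m<\infty$. Then $T^{m!+l}=T^l$. If moreover $V$ is a vector space over a field $F$, then $T$ has a vanishing polynomial of degree at most $m^2+l$.
   Context: $T^0$ is the identity and $T^i=T\circ T^{i-1}$. For a vector space $V$ over $F$ and a (not necessarily linear) $T:V\to V$, $p(T)$ for $p(x)=\sum a_ix^i$ is the map $v\mapsto\sum a_iT^i(v)$; a vanishing polynomial of $T$ is a nonzero $p\in F[x]$ with $p(T)(v)=0$ for all $v\in V$. *)

(* Defs.v *)
From HB Require Import structures.
From mathcomp Require Import all_boot all_order all_algebra.
Set Implicit Arguments. Unset Strict Implicit. Unset Printing Implicit Defensive.
Import GRing.Theory.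
Local Open Scope ring_scope.

(* T^i is [iter i T]: iter 0 T = id, iter i.+1 T = T \o iter i T. *)

Definition iter_image (V : Type) (T : V -> V) (i : nat) : V -> Prop :=
  fun x => exists v : V, iter i T v = x.

Definition has_card (V : Type) (A : V -> Prop) (m : nat) : Prop :=
  exists f : 'I_m -> V, injective f /\ (forall x, A x <-> exists i, f i = x).

Definition poly_app (F : fieldType) (V : lmodType F) (p : {poly F})
    (T : V -> V) (v : V) : V :=
  \sum_(i < size p) p`_i *: iter i T v.

Definition vanishing_poly (F : fieldType) (V : lmodType F) (p : {poly F})
    (T : V -> V) : Prop :=
  p != 0 /\ forall v : V, poly_app p T v = 0.

(* Main.v *)
Require Import Defs.
From HB Require Import structures.
From mathcomp Require Import all_boot all_order all_algebra.
From Stdlib Require Import ClassicalEpsilon.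
Local Open Scope ring_scope.
Import GRing.Theory.

Lemma surj_inj (m : nat) (h : 'I_m -> 'I_m) :
  (forall j, exists i, h i = j) -> injective h.
Proof.
move=> hs.
pose s j := odflt j [pick i | h i == j].
have hsK j : h (s j) = j.
  rewrite /s; case: pickP => [i /eqP //|H].
  by case: (hs j) => i hi; move: (H i); rewrite hi eqxx.
have sinj : injective s by move=> a b e; rewrite -(hsK a) -(hsK b) e.
move=> x y.
have /codomP [j ->] := injF_onto sinj x.
have /codomP [k ->] := injF_onto sinj y.
by rewrite !hsK => ->.
Qed.

Section Key.
Variables (V : Type) (T : V -> V) (l m : nat).
Hypothesis HI : has_card (iter_image T l) m.
Hypothesis HJ : has_card (iter_image T l.+1) m.

Let I := iter_image T l.

Lemma I_closed x : I x -> I (T x).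
Proof. by case=> u <-; exists (T u); rewrite -iterS iterSr. Qed.

Lemma I_iter n x : I x -> I (iter n T x).
Proof. by elim: n => //= n IH Ix; apply: I_closed; apply: IH. Qed.

Lemma T_inj_I x y : I x -> I y -> T x = T y -> x = y.
Proof.
case: HI => f [finj fI]; case: HJ => g [ginj gJ].
have ex i : exists j, g j = T (f i).
  apply/gJ; have [u <-] : I (f i) by apply/fI; exists i.
  by exists u; rewrite iterS.
pose h i := proj1_sig (constructive_indefinite_description _ (ex i)).
have hE i : g (h i) = T (f i) by rewrite /h; case: constructive_indefinite_description.
have hinj : injective h.
  apply: surj_inj => j.
  have [u gu] : iter_image T l.+1 (g j) by apply/gJ; exists j.
  have [i fi] : exists i, f i = iter l T u by apply/fI; exists u.
  by exists i; apply: ginj; rewrite hE fi -iterS gu.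
move=> /fI [i <-] /fI [j <-] e.
by congr f; apply: hinj; apply: ginj; rewrite !hE.
Qed.

Lemma iter_inj_I n x y : I x -> I y -> iter n T x = iter n T y -> x = y.
Proof.
elim: n => //= n IH Ix Iy e; apply: IH => //.
by apply: T_inj_I => //; apply: I_iter.
Qed.

Lemma key w : I w -> exists c, (0 < c <= m)%N /\ iter c T w = w.
Proof.
move=> Iw.
case: HI => f [finj fI].
have ex (a : 'I_m.+1) : exists i, f i = iter a T w by apply/fI; apply: I_iter.
pose k a := proj1_sig (constructive_indefinite_description _ (ex a)).
have kE a : f (k a) = iter a T w by rewrite /k; case: constructive_indefinite_description.
have : ~~ injectiveb k.
  apply/negP => /injectiveP kinj.
  by have := @leq_card _ _ k kinj; rewrite !card_ord ltnn.
case/injectivePn => a [b neab eab].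
have ef : iter a T w = iter b T w by rewrite -!kE eab.
wlog lt : a b neab eab ef / (a < b)%N.
  move=> W; case: (ltngtP a b) => h; first exact: (W a b).
    by apply: (W b a) => //; rewrite eq_sym.
  by move: neab; rewrite (val_inj h) eqxx.
exists (b - a)%N; split.
  by rewrite subn_gt0 lt /= (leq_trans (leq_subr _ _)) // -ltnS.
apply: (iter_inj_I a) => //; first exact: I_iter.
rewrite -iterD subnKC; [exact: esym ef | exact: ltnW].
Qed.

End Key.

Lemma iter_mul (V : Type) (T : V -> V) c k w :
  iter c T w = w -> iter (k * c) T w = w.
Proof. by move=> h; elim: k => //= k IH; rewrite mulSn iterD IH h. Qed.

Section Poly.
Variables (F : fieldType) (V : lmodType F) (T : V -> V).

Lemma papp_ext N (p : {poly F}) (v : V) : (size p <= N)%N ->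
  poly_app p T v = \sum_(0 <= i < N) p`_i *: iter i T v.
Proof.
move=> hN; rewrite /poly_app.
rewrite -(big_mkord xpredT (fun i => p`_i *: iter i T v)) (big_cat_nat (leq0n _) hN) /=.
rewrite [X in _ + X]big1_seq ?addr0 // => i /andP [_]; rewrite mem_index_iota => /andP [hi _].
rewrite nth_default //; exact: scale0r.
Qed.

Lemma papp_mulXn l (q : {poly F}) (v : V) : poly_app ('X^l * q) T v = poly_app q T (iter l T v).
Proof.
have hs : (size ('X^l * q)%R <= l + size q)%N.
  by apply: (leq_trans (size_mul_leq _ _)); rewrite size_polyXn addSn.
rewrite (papp_ext _ _ _ hs) (papp_ext _ _ _ (leqnn _)).
rewrite (big_cat_nat (leq0n l) (leq_addr _ _)) /= big1_seq ?add0r; last first.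
  by move=> i /andP [_]; rewrite mem_index_iota coefXnM => /andP [_ ->]; exact: scale0r.
rewrite -{1}[l]add0n big_addn addKn.
by apply: eq_bigr => i _; rewrite coefXnM ltnNge leq_addl /= addnK iterD.
Qed.

Lemma papp_period (r : {poly F}) c (w : V) : (0 < c)%N -> iter c T w = w ->
  poly_app (r * ('X^c - 1)) T w = 0.
Proof.
move=> c0 hw.
have hs : (size (r * ('X^c - 1))%R <= c + size r)%N.
  apply: (leq_trans (size_mul_leq _ _)).
  by rewrite size_XnsubC // addnS /= addnC.
rewrite (papp_ext _ _ _ hs).
under eq_bigr do rewrite mulrBr mulr1 coefB scalerBl.
rewrite sumrB -(papp_ext _ _ _ (leq_addl _ _)).
rewrite (big_cat_nat (leq0n c) (leq_addr _ _)) /= big1_seq ?add0r; last first.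
  by move=> i /andP [_]; rewrite mem_index_iota coefMXn => /andP [_ ->]; exact: scale0r.
rewrite -{1}[c]add0n big_addn addKn (papp_ext _ _ _ (leqnn _)).
rewrite [X in X - _](_ : _ = \sum_(0 <= i < size r) r`_i *: iter i T w) ?subrr //.
by apply: eq_bigr => i _; rewrite coefMXn ltnNge leq_addl /= addnK iterD hw.
Qed.

End Poly.

Theorem mainTheorem15 :
  (forall (V : Type) (T : V -> V) (l m : nat),
      inhabited V ->
      has_card (iter_image T l) m ->
      has_card (iter_image T l.+1) m ->
      forall v : V, iter (m`! + l) T v = iter l T v)
  /\
  (forall (F : fieldType) (V : lmodType F) (T : V -> V) (l m : nat),
      has_card (iter_image T l) m ->
      has_card (iter_image T l.+1) m ->
      exists p : {poly F},
        vanishing_poly p T /\ (size p <= (m ^ 2 + l).+1)%N).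
Proof.
split.
  move=> V T l m _ HI HJ v.
  have [c [/andP [c0 cm] hc]] := @key _ _ _ _ HI HJ _ (ex_intro _ v erefl).
  have /dvdnP [k ->] := dvdn_fact (m := c) (n := m) (introT andP (conj c0 cm)).
  by rewrite iterD (@iter_mul _ _ _ _ _ hc).
move=> F V T l m HI HJ.
pose q : {poly F} := \prod_(c < m) ('X^(c.+1) - 1).
have qm : q \is monic by apply: monic_prod => c _; apply: monicXnsubC.
exists ('X^l * q); split; first split.
- by apply: monic_neq0; rewrite monicMl //; apply: monicXn.
- move=> v; rewrite papp_mulXn.
  have [c [/andP [c0 cm] hc]] := @key _ _ _ _ HI HJ _ (ex_intro _ v erefl).
  have cI : (c.-1 < m)%N by rewrite prednK.
  rewrite /q (bigD1 (Ordinal cI)) //= prednK // mulrC.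
  exact: papp_period.
- apply: (leq_trans (size_mul_leq _ _)); rewrite size_polyXn addSn /= addnC -addSn leq_add2r.
  rewrite size_prod; last by move=> c _; apply: monic_neq0; apply: monicXnsubC.
  under eq_bigr do rewrite size_XnsubC //.
  rewrite leq_subLR addnS ltnS.
  apply: (@leq_trans (\sum_(i < m) m.+1)).
    by apply: leq_sum => i _; rewrite ltnS; exact: ltn_ord.
  by rewrite sum_nat_const card_ord mulnS expnS expn1.
Qed.
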